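(* Let $G$ be a graph on $n$ vertices and let $m,k$ be integers with $1\leq m<k\leq n$. If $\psi_k(G)>0$, then $\psi_m(G)\geq \psi_k(G)+\left\lfloor\frac{k}{m}\right\rfloor-1$.
   Context: All graphs are finite, simple and nonempty. For a graph $G$ and a positive integer $k$, a $k$-path vertex cover ($k$-PVC) of $G$ is a set $S$ of vertices such that every path on $k$ vertices in $G$ contains at least one vertex of $S$ (if $G$ has no path on $k$ vertices, the empty set is a $k$-PVC). $\psi_k(G)$ denotes the minimum cardinality of a $k$-PVC of $G$. *)

(* Defs.v *)
From mathcomp Require Import all_boot.
Set Implicit Arguments. Unset Strict Implicit. Unset Printing Implicit Defensive.

Definition simple_graph (T : finType) (e : rel T) : Prop :=
  symmetric e /\ irreflexive e.

(* s is (the vertex sequence of) a path in the graph: distinct vertices,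
   consecutive ones adjacent.  A path on k vertices has size s = k. *)
Definition is_gpath (T : finType) (e : rel T) (s : seq T) : bool :=
  uniq s && (if s is x :: t then path e x t else true).

Definition is_kpvc (T : finType) (e : rel T) (k : nat) (S : {set T}) : bool :=
  [forall t : k.-tuple T, is_gpath e t ==> has (fun x => x \in S) t].

(* psi_k(G): minimum cardinality of a k-PVC (setT is always one for k >= 1). *)
Definition psi (T : finType) (e : rel T) (k : nat) : nat :=
  \big[minn/#|T|]_(S : {set T} | is_kpvc e k S) #|S|.

(* Main.v *)
Require Import Defs.
From mathcomp Require Import all_boot.
From mathcomp Require Import zify.

Section Aux.
Variables (T : finType) (e : rel T).

Lemma gpath_cat (s1 s2 : seq T) :
  is_gpath e (s1 ++ s2) -> is_gpath e s1 && is_gpath e s2.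
Proof.
rewrite /is_gpath cat_uniq => /andP[/and3P[u1 _ u2]].
rewrite u1 u2 /=.
case: s1 u1 => [|x t1] u1 /=; first by case: s2 {u2} => [|y t2] //.
rewrite cat_path => /andP[-> p2] /=.
by case: s2 p2 {u2} => [|y t2] //= /andP[_ ->].
Qed.

Lemma count_le_card (B : {set T}) (u : seq T) :
  uniq u -> count (fun x => x \in B) u <= #|B|.
Proof.
move=> uu; rewrite -size_filter cardE; apply: uniq_leq_size.
  exact: filter_uniq.
by move=> x; rewrite mem_filter mem_enum => /andP[].
Qed.

Lemma count_lb (m : nat) (S : {set T}) : 0 < m -> is_kpvc e m S ->
  forall n (s : seq T), size s <= n -> is_gpath e s ->
  size s %/ m <= count (fun x => x \in S) s.
Proof.
move=> m0 hS; elim=> [|n IH] s hs gs.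
  by move: hs; rewrite leqn0 => /eqP ->; rewrite div0n.
case: (ltnP (size s) m) => hm; first by rewrite divn_small.
rewrite -(cat_take_drop m s) in gs *.
case/andP: (gpath_cat _ _ gs) => g1 g2.
have s1 : size (take m s) = m by rewrite size_takel.
have h1 : has (fun x => x \in S) (take m s).
  have st : size (take m s) == m by rewrite s1.
  move/forallP: hS => /(_ (Tuple st)) /implyP; apply; exact: g1.
rewrite count_cat size_cat s1 divnDl ?dvdnn // divnn m0 add1n.
have h2 := IH (drop m s).
rewrite size_drop in h2 *.
rewrite has_count in h1.
have : size s - m <= n by lia.
move=> /h2 /(_ g2) => h3.
lia.
Qed.

End Aux.

Lemma bigmin_le_seq (I : eqType) (r : seq I) (P : pred I) (F : I -> nat) n0 j :
  j \in r -> P j -> \big[minn/n0]_(i <- r | P i) F i <= F j.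
Proof.
elim: r => [|x r IH] //= jr Pj; rewrite big_cons.
case: (eqVneq j x) => [<-|ne]; first by rewrite Pj geq_minl.
move: jr; rewrite in_cons (negbTE ne) /= => jr.
case: (P x); last exact: IH.
exact: leq_trans (geq_minr _ _) (IH jr Pj).
Qed.

Theorem mainTheorem5 (T : finType) (e : rel T) (m k : nat) :
  simple_graph e -> 0 < #|T| ->
  1 <= m -> m < k -> k <= #|T| ->
  0 < psi e k ->
  psi e k + k %/ m - 1 <= psi e m.
Proof.
move=> _ _ m1 mk kT pk.
have q1 : 0 < k %/ m by rewrite divn_gt0 // ltnW.
have main : forall S : {set T}, is_kpvc e m S -> psi e k + k %/ m - 1 <= #|S|.
  move=> S hS.
  set B := [set x in take (k %/ m).-1 (enum S)].
  have hBS : B \subset S.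
    by apply/subsetP => x; rewrite inE => /mem_take; rewrite mem_enum.
  have cardB : #|B| = minn (k %/ m).-1 #|S|.
    rewrite cardsE (card_uniqP _) ?take_uniq ?enum_uniq //.
    by rewrite size_take_min -cardE.
  have hS' : is_kpvc e k (S :\: B).
    apply/forallP => u; apply/implyP => gu.
    apply/negPn/negP => hn.
    have eqc : count (fun x => x \in S) u = count (fun x => x \in B) u.
      apply: eq_in_count => x xu.
      have : x \notin S :\: B by apply: contra hn => h; apply/hasP; exists x.
      rewrite inE negb_and negbK.
      case xB: (x \in B); first by rewrite (subsetP hBS).
      by case: (x \in S).
    have := @count_lb T e m S m1 hS _ _ (leqnn (size u)) gu.
    rewrite eqc size_tuple => h.
    have := @count_le_card T B _ (andP gu).1.
    lia.
  have hp : psi e k <= #|S :\: B|.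
    by rewrite /psi; apply: bigmin_le_seq => //; exact: mem_index_enum.
  move: hp; rewrite cardsD (setIidPr hBS) cardB.
  lia.
rewrite [psi e m]/psi.
apply: (big_ind (fun x => psi e k + k %/ m - 1 <= x)).
- rewrite -cardsT; apply: main.
  apply/forallP => t; apply/implyP => _.
  case: t => [[|x s] /= st]; first by move: st m1 => /eqP <-.
  by rewrite inE.
- by move=> x y hx hy; rewrite leq_min hx hy.
- by move=> S hS; apply: main.
Qed.
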